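(* Let $\mathcal{C}$ be a hypergraph on $V$ and $F$ an edge of $\mathcal{C}$. (i) If $\operatorname{conn_h}(\operatorname{Ind}(\mathcal{C}-F))>\operatorname{conn_h}(\operatorname{Ind}(\mathcal{C}))$, then $\operatorname{conn_h}(\operatorname{Ind}(\mathcal{C}:F))\ge \operatorname{conn_h}(\operatorname{Ind}(\mathcal{C}))-|F|+1$. (ii) If $\operatorname{conn_h}(\operatorname{Ind}(\mathcal{C}:F))\ge \operatorname{conn_h}(\operatorname{Ind}(\mathcal{C}))-|F|+1$, then $\operatorname{conn_h}(\operatorname{Ind}(\mathcal{C}-F))\ge \operatorname{conn_h}(\operatorname{Ind}(\mathcal{C}))$.
   Context: A hypergraph $\mathcal{C}$ on a finite vertex set $V$ is a family of pairwise incomparable subsets of $V$ (its edges), each of cardinality at least $2$. The independence complex $\operatorname{Ind}(\mathcal{C})$ is the simplicial complex on $V$ whose faces are the subsets of $V$ containing no edge of $\mathcal{C}$ (if $V=\emptyset$ it is $\{\emptyset\}$). For an edge $F$: $\mathcal{C}-F$ is the hypergraph on $V$ with edge set $\mathcal{C}\setminus\{F\}$; $N_{\mathcal{C}}(F)=\bigcup\{E\setminus F : E\in\mathcal{C},\ |E\setminus F|=1\}$; and $\mathcal{C}:F$ is the hypergraph on $V\setminus(F\cup N_{\mathcal{C}}(F))$ whose edges are the members of cardinality at least $2$ among the inclusion-minimal members of the family $\{E\setminus F : E\in \mathcal{C}-F\}$. The homological connectivity $\operatorname{conn_h}(\Delta)$ is the largest integer $k$ such that $\tilde H_i(\Delta;\mathbb{Z})=0$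 for all $i\le k$ ($\infty$ if all vanish; $\operatorname{conn_h}(\{\emptyset\})=-2$). *)

(* Defs.v *)
From HB Require Import structures.
From mathcomp Require Import all_boot all_order all_algebra.
From Stdlib Require Import ClassicalEpsilon.
Import Order.TTheory GRing.Theory Num.Theory.

Set Implicit Arguments.
Unset Strict Implicit.
Unset Printing Implicit Defensive.

(* The (reduced = augmented) chain complex: an (n-1)-chain is an
   integer function on sets, supported on faces of cardinality n (n = 0 gives
   the augmentation degree -1, spanned by the empty face).  Simplices are
   oriented by the fixed linear order of T given by enum_rank.  *)

Definition ord_lt (T : finType) (u v : T) : bool := (enum_rank u < enum_rank v)%N.

(* sign of the face s in the boundary of v |: s  (v \notin s):
   (-1)^(position of v in the ordered simplex v |: s) *)
Definition bsign (T : finType) (s : {set T}) (v : T) : int :=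
  ((-1) ^+ #|[set u in s | ord_lt u v]|)%R.

Definition bd (T : finType) (c : {set T} -> int) : {set T} -> int :=
  fun s => (\sum_(v in ~: s) bsign s v * c (v |: s))%R.

Definition is_chain (T : finType) (D : {set {set T}}) (n : nat)
    (c : {set T} -> int) : Prop :=
  forall s, c s != 0%R -> s \in D /\ #|s| = n.

(* the reduced homology group in degree n-1 vanishes: every cycle is a
   boundary *)
Definition hvan_nat (T : finType) (D : {set {set T}}) (n : nat) : Prop :=
  forall c, is_chain D n c -> (forall s, bd c s = 0%R) ->
    exists d, is_chain D n.+1 d /\ (forall s, bd d s = c s).

(* \tilde H_i(D; Z) = 0  (automatically true for i <= -2) *)
Definition hvanish (T : finType) (D : {set {set T}}) (i : int) : Prop :=
  forall n : nat, (n%:Z = i + 1)%R -> hvan_nat D n.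

(* homological connectivity, valued in int extended by +oo (= None) *)
Definition conn_h (T : finType) (D : {set {set T}}) : option int :=
  match excluded_middle_informative (forall i, hvanish D i) with
  | left _ => None
  | right _ => Some (epsilon (inhabits 0%R)
       (fun k : int => (forall i, (i <= k)%R -> hvanish D i) /\
                       ~ hvanish D (k + 1)%R))
  end.

Definition ele (a b : option int) : Prop :=
  match a, b with
  | _, None => True
  | None, Some _ => False
  | Some x, Some y => (x <= y)%R
  end.
Definition elt (a b : option int) : Prop :=
  match a, b with
  | None, _ => False
  | Some _, None => True
  | Some x, Some y => (x < y)%R
  end.
Definition eshift (k : int) (a : option int) : option int :=
  omap (fun x => (x + k)%R) a.

Definition hypergraph (T : finType) (V : {set T}) (C : {set {set T}}) : Prop :=
  (forall E, E \in C -> E \subset V /\ (2 <= #|E|)%N) /\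
  (forall E E', E \in C -> E' \in C -> E \subset E' -> E = E').

Definition Ind (T : finType) (C : {set {set T}}) (V : {set T}) : {set {set T}} :=
  [set s : {set T} | (s \subset V) && [forall E in C, ~~ (E \subset s)]].

Definition nbhd (T : finType) (C : {set {set T}}) (F : {set T}) : {set T} :=
  \bigcup_(E in C | #|E :\: F| == 1%N) (E :\: F).

Definition link_ground (T : finType) (V : {set T}) (C : {set {set T}})
    (F : {set T}) : {set T} := V :\: (F :|: nbhd C F).
Definition link_edges (T : finType) (C : {set {set T}}) (F : {set T})
    : {set {set T}} :=
  let S := [set E :\: F | E in C :\ F] in
  [set G in S | [forall H in S, (H \subset G) ==> (H == G)] && (2 <= #|G|)%N].

(* Main.v *)
Require Import Defs.
From mathcomp Require Import all_boot all_order all_algebra.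
From mathcomp Require Import ring zify.
Import Order.TTheory GRing.Theory Num.Theory.
Set Implicit Arguments.
Unset Strict Implicit.
Unset Printing Implicit Defensive.
Local Open Scope ring_scope.

Lemma bsignU1 (T : finType) (s : {set T}) v w : v \notin s ->
  bsign (v |: s) w = bsign s w * (-1) ^+ ord_lt v w.
Proof.
move=> vs; rewrite /bsign.
have -> : [set u in v |: s | ord_lt u w] =
   if ord_lt v w then v |: [set u in s | ord_lt u w] else [set u in s | ord_lt u w].
  apply/setP => u; case: (boolP (ord_lt v w)) => h; rewrite !inE.
    by case: (eqVneq u v) => [->|] /=; rewrite ?h.
  by case: (eqVneq u v) => [->|] /=; rewrite ?(negPf h) ?(negPf vs).
case: (boolP (ord_lt v w)) => h; last by rewrite ?(negPf h) /= expr0 mulr1.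
by rewrite ?h cardsU1 inE (negPf vs) /= addnC exprD.
Qed.

Lemma ord_lt_sym (T : finType) (v w : T) : v != w -> (ord_lt v w + ord_lt w v = 1)%N.
Proof.
move=> vw; rewrite /ord_lt.
have : enum_rank v != enum_rank w by apply: contra vw => /eqP/enum_rank_inj ->.
by case: ltngtP => // /val_inj ->; rewrite eqxx.
Qed.

Lemma bdbd (T : finType) (c : {set T} -> int) s : bd (bd c) s = 0.
Proof.
pose G v w := if (v \notin s) && (w \notin s) && (v != w) then
   bsign s v * bsign (v |: s) w * c (w |: (v |: s)) else 0.
have E : bd (bd c) s = \sum_v \sum_w G v w.
  rewrite /bd big_mkcond; apply: eq_bigr => v _; rewrite inE.
  case: (boolP (v \in s)) => vs /=.
    by rewrite big1 // => w _; rewrite /G vs.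
  rewrite mulr_sumr big_mkcond; apply: eq_bigr => w _.
  rewrite /G vs !inE /= [v == w]eq_sym mulrA.
  by case: (w == v); case: (w \in s).
have Gs x y : G y x = - G x y.
  rewrite /G [(y == x)]eq_sym [(y \notin s) && _]andbC.
  case: (boolP ((x \notin s) && (y \notin s) && (x != y))) => [/andP[/andP[vs ws] vw]|]; last by rewrite oppr0.
  rewrite !bsignU1 // [y |: (x |: s)]setUCA.
  have := ord_lt_sym vw.
  case: (ord_lt x y); case: (ord_lt y x) => //= _; rewrite ?expr1 ?expr0; ring.
have : \sum_v \sum_w G v w = - \sum_v \sum_w G v w.
  rewrite [LHS]exchange_big /= -sumrN; apply: eq_bigr => v _; rewrite -sumrN.
  by apply: eq_bigr => w _; rewrite Gs.
rewrite -E => /eqP; rewrite -subr_eq0 opprK -mulr2n mulrn_eq0 /= => /eqP //.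
Qed.

Lemma bdB (T : finType) (c e : {set T} -> int) s :
  bd (fun x => c x - e x) s = bd c s - bd e s.
Proof. by rewrite /bd -sumrB; apply: eq_bigr => v _; rewrite mulrBr. Qed.

Lemma bd0 (T : finType) (c : {set T} -> int) s :
  (forall x, c x = 0) -> bd c s = 0.
Proof. by move=> h; rewrite /bd big1 // => v _; rewrite h mulr0. Qed.

Definition downc (T : finType) (D : {set {set T}}) :=
  forall s s' : {set T}, s \subset s' -> s' \in D -> s \in D.

Lemma bd_nz (T : finType) (c : {set T} -> int) s :
  bd c s != 0 -> exists2 v, v \notin s & c (v |: s) != 0.
Proof.
move=> h; apply/exists_inP; apply: contraR h => /exists_inPn h.
rewrite /bd big1 // => v; rewrite inE => vs.
by have := h v vs; rewrite negbK => /eqP ->; rewrite mulr0.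
Qed.

Lemma bd_chain (T : finType) (D : {set {set T}}) n c :
  downc D -> is_chain D n.+1 c -> is_chain D n (bd c).
Proof.
move=> dD hc s /bd_nz [v vs /hc [h1 h2]]; split.
  by apply: dD h1; apply: subsetUr.
by move: h2; rewrite cardsU1 vs => -[].
Qed.

Lemma Ind_down (T : finType) (C : {set {set T}}) (V : {set T}) : downc (Ind C V).
Proof.
move=> s s' ss'; rewrite !inE => /andP[s'V /forall_inP h]; apply/andP; split.
  exact: subset_trans s'V.
apply/forall_inP => E EC; apply: contra (h E EC) => Es; exact: subset_trans ss'.
Qed.

Definition fF (T : finType) (F : {set T}) (v : T) : nat := #|[set u in F | ord_lt u v]|.
Definition wF (T : finType) (F t : {set T}) : int := (-1) ^+ (\sum_(v in t) fF F v).
Definition rr (T : finType) (F : {set T}) (c : {set T} -> int) (t : {set T}) : int :=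
  if t \subset ~: F then wF F t * c (F :|: t) else 0.
Definition ll (T : finType) (F : {set T}) (c : {set T} -> int) (s : {set T}) : int :=
  if F \subset s then wF F (s :\: F) * c (s :\: F) else 0.

Lemma wF2 (T : finType) (F t : {set T}) : wF F t * wF F t = 1.
Proof. by rewrite -expr2 sqrr_sign. Qed.

Lemma wFU1 (T : finType) (F t : {set T}) v : v \notin t ->
  wF F (v |: t) = (-1) ^+ fF F v * wF F t.
Proof. by move=> vt; rewrite /wF big_setU1 //= exprD. Qed.

Lemma cardsU_disj (T : finType) (A B : {set T}) : A :&: B = set0 ->
  #|A :|: B| = (#|A| + #|B|)%N.
Proof. by move=> h; rewrite cardsU h cards0 subn0. Qed.

Lemma bsign_split (T : finType) (F t : {set T}) v : t \subset ~: F ->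
  bsign (F :|: t) v = (-1) ^+ fF F v * bsign t v.
Proof.
move=> tF; rewrite /bsign /fF -exprD.
have -> : [set u in F :|: t | ord_lt u v] =
   [set u in F | ord_lt u v] :|: [set u in t | ord_lt u v].
  by apply/setP => u; rewrite !inE andb_orl.
rewrite cardsU_disj //.
apply/setP => u; rewrite !inE; apply/negP => /andP[/andP[uF _] /andP[ut _]].
by move: (subsetP tF u ut); rewrite inE uF.
Qed.

Lemma rr_bd (T : finType) (F : {set T}) c t : rr F (bd c) t = bd (rr F c) t.
Proof.
rewrite /rr /bd; case: (boolP (t \subset ~: F)) => tF; last first.
  rewrite big1 // => v _; rewrite subUset (negPf tF) andbF mulr0 //.
rewrite mulr_sumr (big_mkcond (fun v => v \in ~: (F :|: t))) (big_mkcond (fun v => v \in ~: t)).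
apply: eq_bigr => v _; rewrite !inE subUset sub1set !inE tF andbT.
case: (boolP (v \in t)) => vt; first by rewrite orbT.
case: (boolP (v \in F)) => vF /=; first by rewrite mulr0.
rewrite bsign_split // wFU1 // setUCA; ring.
Qed.

Lemma ll_rr (T : finType) (F : {set T}) c (s : {set T}) : F \subset s -> ll F (rr F c) s = c s.
Proof.
move=> Fs; rewrite /ll /rr Fs subsetDr mulrA wF2 mul1r.
congr c; apply/setP => x; rewrite !inE; case: (boolP (x \in F)) => //= xF.
by rewrite (subsetP Fs).
Qed.

Lemma rr_ll (T : finType) (F : {set T}) c (t : {set T}) :
  (c t != 0 -> t \subset ~: F) -> rr F (ll F c) t = c t.
Proof.
move=> h; rewrite /rr /ll; case: (boolP (t \subset ~: F)) => tF; last first.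
  by apply/esym/eqP; apply: contraR tF => /h.
have -> : (F :|: t) :\: F = t.
  apply/setP => x; rewrite !inE; case: (boolP (x \in F)) => //= xF.
  by apply/esym/negP => xt; move: (subsetP tF x xt); rewrite inE xF.
by rewrite subsetUl mulrA wF2 mul1r.
Qed.

Lemma rrB (T : finType) (F : {set T}) c e t :
  rr F (fun x => c x - e x) t = rr F c t - rr F e t.
Proof. by rewrite /rr; case: ifP; rewrite ?subr0 // mulrBr. Qed.

Lemma FB1 (T : finType) (C : {set {set T}}) V F s :
  s \in Ind C V -> s \in Ind (C :\ F) V.
Proof.
rewrite !inE => /andP[-> /forall_inP h] /=; apply/forall_inP => E.
by rewrite !inE => /andP[_ /h].
Qed.

Lemma FB2 (T : finType) (C : {set {set T}}) V F s : 
  s \in Ind (C :\ F) V -> ~~ (F \subset s) -> s \in Ind C V.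
Proof.
rewrite !inE => /andP[-> /forall_inP h] nF /=; apply/forall_inP => E EC.
case: (eqVneq E F) => [-> //|EF]; apply: h; by rewrite !inE EF.
Qed.

Lemma FB3 (T : finType) (C : {set {set T}}) V F s : F \in C ->
  s \in Ind C V -> ~~ (F \subset s).
Proof. by move=> FC; rewrite inE => /andP[_ /forall_inP h]; apply: h. Qed.

Lemma exists_min (T : finType) (P : pred {set T}) (A : {set T}) : P A ->
  exists G, [/\ P G, G \subset A & forall H, P H -> H \subset G -> H = G].
Proof.
elim: {A}#|A| {-2}A (leqnn #|A|) => [|n IH] A hA PA.
  exists A; split => // H _ HA; apply/eqP; rewrite eqEcard HA.
  by apply: leq_trans hA _.
case: (boolP [exists H, P H && (H \proper A)]) => [/existsP[H /andP[PH HA]]|].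
  have hH : (#|H| <= n)%N by rewrite -ltnS; apply: leq_trans (proper_card HA) hA.
  have [G [PG GH Gm]] := IH H hH PH; exists G; split => //.
  by apply: subset_trans GH (proper_sub HA).
move/existsPn => h; exists A; split => // H PH HA.
apply/eqP; rewrite eqEproper HA /=; apply/negP => pr.
by move: (h H); rewrite PH pr.
Qed.

Lemma FL1 (T : finType) (V : {set T}) (C : {set {set T}}) (F t : {set T}) :
  t \subset ~: F -> F :|: t \in Ind (C :\ F) V ->
  t \in Ind (link_edges C F) (link_ground V C F).
Proof.
move=> tF; rewrite !inE => /andP[FtV /forall_inP h]; apply/andP; split.
  apply/subsetP => x xt; rewrite !inE.
  have xnF : x \notin F by move: (subsetP tF x xt); rewrite inE.
  rewrite (negPf xnF) (subsetP FtV) ?inE ?xt ?orbT // andbT /=; apply/negP.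
  move/bigcupP => -[E /andP[EC /cards1P[z Ez]] xE].
  move: (xE); rewrite Ez inE => /eqP xz; subst z.
  have EC' : E \in C :\ F.
    by rewrite !inE EC andbT; apply/eqP => EF; move: xE; rewrite EF setDv inE.
  move/negP: (h E EC'); apply; apply/subsetP => y yE; rewrite inE; case: (boolP (y \in F)) => //= yF.
  have : y \in E :\: F by rewrite inE yF yE.
  by rewrite Ez inE => /eqP ->.
apply/forall_inP => G; rewrite inE => /andP[/imsetP[E EC ->] _].
apply/negP => EFt; move/negP: (h E EC); apply; apply/subsetP => y yE; rewrite inE.
case: (boolP (y \in F)) => //= yF; apply: (subsetP EFt); by rewrite inE yF.
Qed.

Lemma FL2 (T : finType) (V : {set T}) (C : {set {set T}}) (F t : {set T}) :
  hypergraph V C -> F \in C ->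
  t \in Ind (link_edges C F) (link_ground V C F) ->
  t \subset ~: F /\ F :|: t \in Ind (C :\ F) V.
Proof.
move=> [hsub hinc] FC; rewrite !inE => /andP[tg /forall_inP h].
have tF : t \subset ~: F.
  by apply/subsetP => x /(subsetP tg); rewrite !inE negb_or -andbA => /andP[].
have tN : forall x, x \in t -> x \notin nbhd C F.
  by move=> x /(subsetP tg); rewrite !inE negb_or => /andP[/andP[]].
split => //; apply/andP; split.
  rewrite subUset (hsub F FC).1 /=; apply: subset_trans tg _; exact: subsetDl.
apply/forall_inP => E; rewrite !inE => /andP[EF EC]; apply/negP => EFt.
pose S := [set E :\: F | E in C :\ F].
have ES : E :\: F \in S by apply/imsetP; exists E => //; rewrite !inE EF.
have [G [GS GE Gm]] := exists_min (P := fun H => H \in S) ES.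
have Gt : G \subset t.
  apply: subset_trans GE _; apply/subsetP => y; rewrite inE => /andP[yF yE].
  by move: (subsetP EFt y yE); rewrite inE (negPf yF).
move: (GS) => /imsetP[E' E'C GE'].
have G0 : G != set0.
  apply/eqP => G0; move: E'C; rewrite !inE => /andP[E'F E'C].
  have : E' \subset F by rewrite -setD_eq0 -GE' G0.
  by move/(hinc E' F E'C FC) => /eqP; rewrite (negPf E'F).
have G1 : #|G| != 1%N.
  apply/negP => /cards1P[z Gz].
  have zt : z \in t by apply: (subsetP Gt); rewrite Gz inE.
  apply: (negP (tN z zt)); rewrite /nbhd; apply/bigcupP.
  move: E'C; rewrite !inE => /andP[_ E'C].
  by exists E'; rewrite ?E'C -GE' ?Gz ?cards1 ?inE.
have G2 : (2 <= #|G|)%N.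
  by move: G0 G1; rewrite -card_gt0; case: #|G| => [|[|]].
apply: (negP (h G _)) => //.
rewrite inE GS G2 andbT /=; apply/forall_inP => H HS; apply/implyP => HG.
by rewrite (Gm H HS HG).
Qed.

Lemma bd_ext (T : finType) (c e : {set T} -> int) s :
  (forall x, c x = e x) -> bd c s = bd e s.
Proof. by move=> h; rewrite /bd; apply: eq_bigr => v _; rewrite h. Qed.

Lemma bdD (T : finType) (c e : {set T} -> int) s :
  bd (fun x => c x + e x) s = bd c s + bd e s.
Proof. by rewrite /bd -big_split; apply: eq_bigr => v _; rewrite mulrDr. Qed.

Lemma chainB (T : finType) (D : {set {set T}}) n c e :
  is_chain D n c -> is_chain D n e -> is_chain D n (fun x => c x - e x).
Proof.
move=> hc he s h; case: (eqVneq (c s) 0) => [c0|/hc //].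
by apply: he; move: h; rewrite c0 sub0r oppr_eq0.
Qed.

Lemma chainD (T : finType) (D : {set {set T}}) n c e :
  is_chain D n c -> is_chain D n e -> is_chain D n (fun x => c x + e x).
Proof.
move=> hc he s h; case: (eqVneq (c s) 0) => [c0|/hc //].
by apply: he; move: h; rewrite c0 add0r.
Qed.

Lemma chain_sub (T : finType) (D D' : {set {set T}}) n c :
  {subset D <= D'} -> is_chain D n c -> is_chain D' n c.
Proof. by move=> sD hc s /hc [/sD]. Qed.

Lemma CR (T : finType) (V : {set T}) (C : {set {set T}}) (F : {set T}) n m c :
  is_chain (Ind (C :\ F) V) n c -> (m + #|F|)%N = n ->
  is_chain (Ind (link_edges C F) (link_ground V C F)) m (rr F c).
Proof.
move=> hc hm t; rewrite /rr; case: ifP => tF; last by rewrite eqxx.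
rewrite mulf_eq0 negb_or => /andP[_ /hc [h1 h2]]; split; first exact: FL1.
move: h2; rewrite cardsU_disj; last first.
  apply/setP => x; rewrite !inE; apply/negP => /andP[xF xt].
  by move: (subsetP tF x xt); rewrite inE xF.
by rewrite -hm addnC => /addIn.
Qed.

Lemma setUDK' (T : finType) (F s : {set T}) : F \subset s -> F :|: s :\: F = s.
Proof.
move=> Fs; apply/setP => x; rewrite !inE; case: (boolP (x \in F)) => //= xF.
by rewrite (subsetP Fs).
Qed.

Lemma CL (T : finType) (V : {set T}) (C : {set {set T}}) (F : {set T}) m t :
  hypergraph V C -> F \in C ->
  is_chain (Ind (link_edges C F) (link_ground V C F)) m t ->
  is_chain (Ind (C :\ F) V) (m + #|F|) (ll F t).
Proof.
move=> hC FC ht s; rewrite /ll; case: ifP => Fs; last by rewrite eqxx.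
rewrite mulf_eq0 negb_or => /andP[_ /ht [h1 h2]].
have [_] := FL2 hC FC h1; rewrite setUDK' // => ->; split => //.
rewrite -{1}(setUDK' Fs) cardsU_disj; first by rewrite h2 addnC.
by apply/setP => x; rewrite !inE; case: (x \in F); rewrite ?andbF.
Qed.

Lemma L_supp (T : finType) (V : {set T}) (C : {set {set T}}) (F : {set T}) m t :
  hypergraph V C -> F \in C ->
  is_chain (Ind (link_edges C F) (link_ground V C F)) m t ->
  forall x, t x != 0 -> x \subset ~: F.
Proof. by move=> hC FC ht x /ht [/(FL2 hC FC) []]. Qed.

Lemma CA0 (T : finType) (V : {set T}) (C : {set {set T}}) (F : {set T}) n e :
  F \in C -> is_chain (Ind C V) n e -> forall x, rr F e x = 0.
Proof.
move=> FC he x; rewrite /rr; case: ifP => // _.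
case: (eqVneq (e (F :|: x)) 0) => [->|/he [h _]]; first by rewrite mulr0.
by move: (FB3 FC h); rewrite subsetUl.
Qed.

Lemma CA (T : finType) (V : {set T}) (C : {set {set T}}) (F : {set T}) n c :
  is_chain (Ind (C :\ F) V) n c -> (forall s : {set T}, F \subset s -> c s = 0) ->
  is_chain (Ind C V) n c.
Proof.
move=> hc h0 s cs; have [h1 h2] := hc s cs; split => //.
apply: (FB2 h1).
by apply/negP => /h0 c0; rewrite c0 eqxx in cs.
Qed.

Lemma bd_rr_ll (T : finType) (F : {set T}) (d u : {set T} -> int) (s : {set T}) :
  (forall x, u x != 0 -> x \subset ~: F) -> (forall x, d x = ll F u x) ->
  F \subset s -> bd d s = ll F (bd u) s.
Proof.
move=> hu hd Fs; rewrite -(ll_rr _ Fs) /ll Fs rr_bd; congr (_ * _).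
apply: bd_ext => x; rewrite /rr; case: ifP => xF.
  by rewrite hd -(rr_ll (hu x)) /rr xF.
by case: (eqVneq (u x) 0) => [-> //|/hu]; rewrite xF.
Qed.

Lemma core_ii (T : finType) (V : {set T}) (C : {set {set T}}) (F : {set T}) n :
  hypergraph V C -> F \in C ->
  hvan_nat (Ind C V) n ->
  (forall m, (m + #|F|)%N = n -> hvan_nat (Ind (link_edges C F) (link_ground V C F)) m) ->
  hvan_nat (Ind (C :\ F) V) n.
Proof.
move=> hC FC hA hL; rewrite /hvan_nat => c hc cyc.
case: (leqP #|F| n) => Fn; last first.
  have hcA : is_chain (Ind C V) n c.
    apply: (CA hc) => s Fs; apply/eqP; apply: contraLR Fn => /hc [_ <-].
    by rewrite -leqNgt subset_leq_card.
  have [d [hd bdd]] := hA c hcA cyc; exists d; split => //.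
  by apply: chain_sub hd => x; apply: FB1.
have hm : (n - #|F| + #|F|)%N = n by rewrite subnK.
pose t := rr F c.
have ht := CR hc hm.
have cyct : forall x, bd t x = 0.
  by move=> x; rewrite -rr_bd /rr; case: ifP => // _; rewrite cyc mulr0.
have [u [hu bdu]] := hL _ hm t ht cyct.
pose d := ll F u.
have hd : is_chain (Ind (C :\ F) V) n.+1 d.
  by have := CL hC FC hu; rewrite addSn hm.
pose c' := fun s => c s - bd d s.
have hc' : is_chain (Ind C V) n c'.
  apply: CA; first exact: (chainB hc (bd_chain (@Ind_down _ _ _) hd)).
  move=> s Fs; rewrite /c' (bd_rr_ll (L_supp hC FC hu) (fun _ => erefl) Fs).
  by rewrite -{1}(ll_rr c Fs) /ll Fs bdu subrr.
have cyc' : forall s, bd c' s = 0 by move=> s; rewrite bdB cyc bdbd subrr.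
have [e [he bde]] := hA c' hc' cyc'.
exists (fun s => e s + d s); split.
  by apply: chainD => //; apply: chain_sub he => x; apply: FB1.
by move=> s; rewrite bdD bde /c' subrK.
Qed.

Lemma core_i (T : finType) (V : {set T}) (C : {set {set T}}) (F : {set T}) n m :
  hypergraph V C -> F \in C ->
  hvan_nat (Ind (C :\ F) V) n -> hvan_nat (Ind C V) n.-1 -> (m + #|F|)%N = n ->
  hvan_nat (Ind (link_edges C F) (link_ground V C F)) m.
Proof.
move=> hC FC hB hA hm; rewrite /hvan_nat => t ht cyc.
have F2 := (hC.1 F FC).2.
have hn : n = n.-1.+1.
  by rewrite prednK // -hm; lia.
pose c := ll F t.
have hc : is_chain (Ind (C :\ F) V) n c by rewrite -hm; exact: CL hC FC ht.
have hbc : is_chain (Ind C V) n.-1 (bd c).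
  apply: (@CA _ _ _ F); first by apply: (bd_chain (@Ind_down _ _ _)); rewrite -hn.
  move=> s Fs; rewrite (bd_rr_ll (L_supp hC FC ht) (fun _ => erefl) Fs) /ll Fs.
  by rewrite cyc mulr0.
have [e [he bde]] := hA (bd c) hbc (fun s => bdbd c s).
rewrite -hn in he.
pose c' := fun s => c s - e s.
have hc' : is_chain (Ind (C :\ F) V) n c'.
  by apply: chainB hc _; apply: chain_sub he => x; apply: FB1.
have cyc' : forall s, bd c' s = 0 by move=> s; rewrite bdB bde subrr.
have [d [hd bdd]] := hB c' hc' cyc'.
exists (rr F d); split.
  by apply: (CR hd); rewrite addSn hm.
move=> s.
have E1 : rr F (bd d) s = rr F c' s by rewrite /rr bdd.
rewrite -rr_bd E1 /c' rrB (CA0 FC he) subr0 rr_ll //.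
exact: (L_supp hC FC ht).
Qed.

From Stdlib Require Import Classical ClassicalEpsilon.

Lemma conn_None (T : finType) (D : {set {set T}}) : conn_h D = None -> forall n, hvan_nat D n.
Proof.
rewrite /conn_h; case: excluded_middle_informative => // h _ n.
by apply: (h (n%:Z - 1)); rewrite subrK.
Qed.

Lemma conn_None' (T : finType) (D : {set {set T}}) : (forall n, hvan_nat D n) -> conn_h D = None.
Proof.
move=> H; rewrite /conn_h; case: excluded_middle_informative => // h; exfalso.
by apply: h => i n _; apply: H.
Qed.

Lemma min_fail (Q : nat -> Prop) n : ~ Q n -> exists n0, ~ Q n0 /\ forall m, (m < n0)%N -> Q m.
Proof.
elim/ltn_ind: n => n IH hQ.
case: (classic (forall m, (m < n)%N -> Q m)) => [H|H]; first by exists n.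
have [m Hm] := not_all_ex_not _ _ H; have [mn Qm] := imply_to_and _ _ Hm.
exact: IH m mn Qm.
Qed.

Lemma conn_Some (T : finType) (D : {set {set T}}) k : conn_h D = Some k ->
  (forall n : nat, (n%:Z <= k + 1)%R -> hvan_nat D n) /\
  (exists n : nat, n%:Z = (k + 2)%R /\ ~ hvan_nat D n).
Proof.
rewrite /conn_h; case: excluded_middle_informative => // h [<-].
set P := (fun k0 : int => _).
have : exists k0, P k0.
  have [i hi] := not_all_ex_not _ _ h.
  have [n Hn] := not_all_ex_not _ _ hi; have [_ hn] := imply_to_and _ _ Hn.
  have [n0 [h0 hmin]] := min_fail hn.
  exists (n0%:Z - 2)%R; split.
    move=> i0 hi0 n1 hn1; apply: hmin; lia.
  move=> hv; apply: h0; apply: hv; lia.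
move=> /(epsilon_spec (inhabits 0%R)) [H1 H2]; split.
  move=> n hn; apply: (H1 (n%:Z - 1)%R); [move: hn; set e := epsilon _ _; lia | by rewrite subrK].
have [n Hn] := not_all_ex_not _ _ H2; have [hn1 hn2] := imply_to_and _ _ Hn.
by exists n; split => //; rewrite hn1 -addrA.
Qed.

Lemma geP (T : finType) (D : {set {set T}}) (x : int) :
  ele (Some x) (conn_h D) -> forall n : nat, (n%:Z <= x + 1)%R -> hvan_nat D n.
Proof.
case E: (conn_h D) => [k|] /= H n hn; last exact: conn_None.
have [H1 _] := conn_Some E; apply: H1; lia.
Qed.

Lemma geI (T : finType) (D : {set {set T}}) (x : int) :
  (forall n : nat, (n%:Z <= x + 1)%R -> hvan_nat D n) -> ele (Some x) (conn_h D).
Proof.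
case E: (conn_h D) => [k|] //= H.
have [_ [n [hn hv]]] := conn_Some E.
rewrite leNgt; apply/negP => lt; apply: hv; apply: H; lia.
Qed.

Unset Implicit Arguments.
Close Scope ring_scope.

Theorem lemma3p13 (T : finType) (V : {set T}) (C : {set {set T}}) (F : {set T}) :
  hypergraph V C -> F \in C ->
  (elt (conn_h (Ind C V)) (conn_h (Ind (C :\ F) V)) ->
     ele (eshift (1 - (#|F|)%:Z)%R (conn_h (Ind C V)))
         (conn_h (Ind (link_edges C F) (link_ground V C F))))
  /\
  (ele (eshift (1 - (#|F|)%:Z)%R (conn_h (Ind C V)))
       (conn_h (Ind (link_edges C F) (link_ground V C F))) ->
     ele (conn_h (Ind C V)) (conn_h (Ind (C :\ F) V))).
Proof.
move=> hC FC; have F2 := (hC.1 F FC).2; split.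
  case EA: (conn_h (Ind C V)) => [k|] //= H.
  have [VA _] := conn_Some EA.
  have VB : forall n : nat, (n%:Z <= k + 2)%R -> hvan_nat (Ind (C :\ F) V) n.
    move: H; case EB: (conn_h (Ind (C :\ F) V)) => [k'|] /= H n hn.
      have [VB _] := conn_Some EB; apply: VB; lia.
    exact: conn_None.
  apply: geI => m hm.
  apply: (core_i (n := (m + #|F|)%N)) => //.
    apply: VB; lia.
  apply: VA; lia.
case EA: (conn_h (Ind C V)) => [k|] /= H.
  have [VA _] := conn_Some EA.
  apply: geI => n hn; apply: core_ii => //.
    apply: VA; lia.
  move=> m hm; apply: (geP H); lia.
rewrite conn_None' //.
have VL : forall n, hvan_nat (Ind (link_edges C F) (link_ground V C F)) n.
  by apply: conn_None; move: H; case: (conn_h _).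
move=> n; apply: core_ii => //; exact: conn_None.
Qed.
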